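(* Let $\mathcal{D}=\{D_1,\ldots,D_N\}$ be a finite set of closed disks in the plane, $D_i$ having center $c_i$ and radius $\rho_i\ge 0$, and consider its Apollonius diagram. Let $p$ and $q$ be two points on an Apollonius edge of the cell $A_i$ of $D_i$, and let $\gamma$ be the arc of that edge between $p$ and $q$. Then $\gamma$ is contained in the smallest closed disk with center $c_i$ that contains $p$ and $q$, i.e. the closed disk of center $c_i$ and radius $\max(\|p-c_i\|,\|q-c_i\|)$.
   Context: For a point $x\in\mathbb{R}^2$, $\delta_i(x)=\|x-c_i\|-\rho_i$ (Euclidean norm). The Apollonius cell of $D_i$ is $A_i=\{x\in\mathbb{R}^2 \mid \delta_i(x)\le\delta_j(x),\ j=1,\ldots,N\}$. The one-dimensional connected sets of points belonging to exactly two Apollonius cells are the Apollonius edges; points belonging to at least three cells are the Apollonius vertices. The bisector of $D_i,D_j$ is $B_{ij}=\{x\mid \delta_i(x)=\delta_j(x)\}$, so each edge of $A_i$ lies on a bisector $B_{ij}$. *)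

(* Defs.v *)
(* Points of the plane are pairs (x1, x2) : R * R
   with the product topology (= the Euclidean topology). *)
From HB Require Import structures.
From mathcomp Require Import all_boot all_order all_algebra.
From mathcomp Require Import all_classical all_reals all_analysis.
Set Implicit Arguments. Unset Strict Implicit. Unset Printing Implicit Defensive.
Import Order.TTheory GRing.Theory Num.Theory numFieldNormedType.Exports.
Local Open Scope classical_set_scope.
Local Open Scope ring_scope.

Section Apollonius.
Variable R : realType.

Definition eucl_dist (x y : R * R) : R :=
  Num.sqrt ((x.1 - y.1) ^+ 2 + (x.2 - y.2) ^+ 2).

Variables (N : nat) (c : 'I_N -> R * R) (rho : 'I_N -> R).

Definition delta (i : 'I_N) (x : R * R) : R := eucl_dist x (c i) - rho i.

Definition apollonius_cell (i : 'I_N) : set (R * R) :=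
  [set x | forall j : 'I_N, delta i x <= delta j x].

Definition in_exactly_two_cells : set (R * R) :=
  [set x | exists i j : 'I_N, [/\ i != j, apollonius_cell i x,
     apollonius_cell j x &
     forall k, apollonius_cell k x -> k = i \/ k = j]].

Definition apollonius_edge_of (i : 'I_N) (E : set (R * R)) : Prop :=
  exists x, [/\ in_exactly_two_cells x,
     E = @connected_component (R * R)%type in_exactly_two_cells x &
     E `<=` apollonius_cell i].

End Apollonius.

(* The arc of the (curve) E between p and q: the points of E lying in every
   connected subset of E containing both p and q (for an arc E this is exactly
   the sub-arc with endpoints p and q). *)
Definition arc_between (R : realType) (E : set (R * R)) (p q : R * R)
  : set (R * R) :=
  [set x | forall C : set (R * R), C `<=` E -> @connected (R * R)%type C -> C p -> C q -> C x].

(* Main.v *)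
Require Import Defs.
From HB Require Import structures.
From mathcomp Require Import all_boot all_order all_algebra.
From mathcomp Require Import all_classical all_reals all_analysis.
From mathcomp Require Import ring lra.
Set Implicit Arguments. Unset Strict Implicit. Unset Printing Implicit Defensive.
Import Order.TTheory GRing.Theory Num.Theory numFieldNormedType.Exports.
Local Open Scope classical_set_scope.
Local Open Scope ring_scope.
Section S.
Variable R : realType.
Lemma fst_cont : continuous (@fst R R).
Proof. move=> x; exact: cvg_fst. Qed.
Lemma snd_cont : continuous (@snd R R).
Proof. move=> x; exact: cvg_snd. Qed.
Lemma dist_cont (a : R * R) : continuous (fun x : R * R => eucl_dist x a).
Proof.
move=> x; rewrite /eucl_dist.
apply: continuous_comp; last exact: sqrt_continuous.
apply: continuousD; apply: continuousM;
  apply: continuousB; (try exact: fst_cont); (try exact: snd_cont); apply: cvg_cst.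
Qed.
Lemma pair_cont (f g : R -> R) : continuous f -> continuous g -> continuous (fun t => (f t, g t)).
Proof. move=> cf cg t; exact: (cvg_pair (cf t) (cg t)). Qed.
Lemma mnl (a b : R) : Num.min a b <= a.
Proof. rewrite /Num.min; case: ifP => // /negbT; rewrite -leNgt. done. Qed.
Lemma mnr (a b : R) : Num.min a b <= b.
Proof. rewrite /Num.min; case: ifP => // /ltW. done. Qed.
Lemma mxl (a b : R) : a <= Num.max a b.
Proof. rewrite /Num.max; case: ifP => // /ltW. done. Qed.
Lemma mxr (a b : R) : b <= Num.max a b.
Proof. rewrite /Num.max; case: ifP => // /negbT; rewrite -leNgt. done. Qed.
Lemma minor (x y : R) : Num.min x y = x \/ Num.min x y = y.
Proof. by rewrite /Num.min; case: ifP; auto. Qed.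
Lemma maxor (x y : R) : Num.max x y = x \/ Num.max x y = y.
Proof. by rewrite /Num.max; case: ifP; auto. Qed.

Lemma key (E : set (R*R)) (phi : R*R -> R) (gam : R -> R*R) (g : R*R -> R) (M : R) p q :
 connected E -> continuous phi -> continuous gam -> (forall y, E y -> gam (phi y) = y) -> E p -> E q ->
 (forall y, E y -> Num.min (phi p) (phi q) <= phi y <= Num.max (phi p) (phi q) -> g y <= M) ->
 arc_between E p q `<=` [set x | g x <= M].
Proof.
move=> cE cphi cgam gphi Ep Eq Hb.
set lo := Num.min (phi p) (phi q); set hi := Num.max (phi p) (phi q).
have Iint : is_interval (phi @` E).
  apply/connected_intervalP; apply: connected_continuous_connected => //.
  exact: continuous_subspaceT.
have Elo : (phi @` E) lo by case: (minor (phi p) (phi q)); rewrite -/lo => ->; [exists p|exists q].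
have Ehi : (phi @` E) hi by case: (maxor (phi p) (phi q)); rewrite -/hi => ->; [exists p|exists q].
have CE : forall t, lo <= t <= hi -> exists y, E y /\ phi y = t.
  by move=> t ht; have [y Ey <-] := Iint _ _ Elo Ehi t ht; exists y.
move=> x Hx; have : (gam @` [set t | lo <= t <= hi]) x.
  apply: (Hx (gam @` [set t | lo <= t <= hi])).
- move=> _ [t ht <-]; have [y [Ey <-]] := CE t ht; by rewrite gphi.
- apply: connected_continuous_connected; last exact: continuous_subspaceT.
  apply/connected_intervalP => a b ha hb z /andP[az zb]; apply/andP; split.
    by apply: le_trans az; case/andP: ha.
  by apply: le_trans zb _; case/andP: hb.
- exists (phi p); last exact: gphi.
  by rewrite /= /lo /hi mnl mxl.
- exists (phi q); last exact: gphi.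
  by rewrite /= /lo /hi mnr mxr.
move=> [t ht <-]; have [y [Ey eyt]] := CE t ht; rewrite -eyt gphi //.
by apply: Hb => //; rewrite eyt.
Qed.
End S.
Lemma dist_ge0 {R : realType} (x y : R * R) : 0 <= eucl_dist x y.
Proof. exact: sqrtr_ge0. Qed.
Lemma dist_sq {R : realType} (x y : R * R) : eucl_dist x y ^+ 2 = (x.1 - y.1) ^+ 2 + (x.2 - y.2) ^+ 2.
Proof. rewrite /eucl_dist sqr_sqrtr //; apply: addr_ge0; exact: sqr_ge0. Qed.

Lemma tri_alg {R : realType} (a b e u1 u2 v1 v2 : R) : 0 <= a -> 0 <= b -> 0 <= e ->
  a ^+ 2 = (u1 + v1) ^+ 2 + (u2 + v2) ^+ 2 -> b ^+ 2 = u1 ^+ 2 + u2 ^+ 2 ->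
  e ^+ 2 = v1 ^+ 2 + v2 ^+ 2 -> a <= b + e.
Proof.
move=> ha hb he Ea Eb Ee.
have lag : (u1 * v1 + u2 * v2) ^+ 2 <= (b * e) ^+ 2.
  rewrite exprMn Eb Ee.
  have -> : (u1 ^+ 2 + u2 ^+ 2) * (v1 ^+ 2 + v2 ^+ 2) = (u1 * v1 + u2 * v2) ^+ 2 + (u1 * v2 - u2 * v1) ^+ 2 by ring.
  by rewrite lerDl sqr_ge0.
have be0 : 0 <= b * e by apply: mulr_ge0.
have dot : u1 * v1 + u2 * v2 <= b * e.
  case: (lerP (u1 * v1 + u2 * v2) 0) => h; first by apply: le_trans h be0.
  by rewrite -ler_sqr // nnegrE ltW.
have : a ^+ 2 <= (b + e) ^+ 2.
  rewrite Ea; have -> : (b + e) ^+ 2 = b ^+ 2 + e ^+ 2 + 2 * (b * e) by ring.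
  rewrite Eb Ee; have -> : (u1 + v1) ^+ 2 + (u2 + v2) ^+ 2 = u1 ^+ 2 + u2 ^+ 2 + (v1 ^+ 2 + v2 ^+ 2) + 2 * (u1 * v1 + u2 * v2) by ring.
  lra.
rewrite ler_sqr // nnegrE; exact: addr_ge0.
Qed.

Lemma tri {R : realType} (x y z : R * R) : eucl_dist x z <= eucl_dist x y + eucl_dist y z.
Proof.
apply: (@tri_alg R _ _ _ (x.1 - y.1) (x.2 - y.2) (y.1 - z.1) (y.2 - z.2));
  rewrite ?dist_ge0 ?dist_sq //.
by congr (_ ^+ 2 + _ ^+ 2); ring.
Qed.

Section G.
Variables (R : realType) (N : nat) (c : 'I_N -> R * R) (rho : 'I_N -> R).
Local Notation A := (apollonius_cell c rho).
Local Notation S := (in_exactly_two_cells c rho).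
Local Notation dl := (delta c rho).

Lemma three_cells y u v w : S y -> A u y -> A v y -> A w y -> u != v -> v != w -> u != w -> False.
Proof.
move=> [a [b [ab _ _ H]]] Au Av Aw uv vw uw.
case: (H _ Au) => eu; case: (H _ Av) => ev; case: (H _ Aw) => ew; subst;
  by rewrite ?eqxx in uv vw uw.
Qed.

Lemma partner i y : A i y -> S y -> exists j, [/\ j != i, A j y & forall k, A k y -> k = i \/ k = j].
Proof.
move=> Ai [a [b [ab Aa Ab H]]].
case: (H _ Ai) => ei; subst.
  exists b; split => //; by rewrite eq_sym.
exists a; split => // k /H []; auto.
Qed.

Lemma scale_dist (x y p q : R * R) (s : R) : 0 <= s -> x.1 - y.1 = s * (p.1 - q.1) -> x.2 - y.2 = s * (p.2 - q.2) ->
  eucl_dist x y = s * eucl_dist p q.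
Proof.
move=> s0 h1 h2; rewrite /eucl_dist h1 h2.
have -> : (s * (p.1 - q.1)) ^+ 2 + (s * (p.2 - q.2)) ^+ 2 = s ^+ 2 * ((p.1 - q.1) ^+ 2 + (p.2 - q.2) ^+ 2) by ring.
by rewrite sqrtrM ?sqr_ge0 // sqrtr_sqr ger0_norm.
Qed.

Definition seg (o p : R * R) (t : R) : R * R := (o.1 + t * (p.1 - o.1), o.2 + t * (p.2 - o.2)).

Lemma seg_S i j p : j != i -> c j = c i -> rho j = rho i -> A i p -> A j p ->
  (forall k, A k p -> k = i \/ k = j) -> forall t, 0 <= t <= 1 -> S (seg (c i) p t).
Proof.
move=> ji cji rji Aip Ajp Hk t /andP[t0 t1].
set y := seg (c i) p t.
have dyc : eucl_dist y (c i) = t * eucl_dist p (c i).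
  by apply: scale_dist => //=; ring.
have dpy : eucl_dist p y = (1 - t) * eucl_dist p (c i).
  by apply: scale_dist => /=; [lra|ring|ring].
have lowk : forall k, delta c rho k p <= (1 - t) * eucl_dist p (c i) + delta c rho k y.
  move=> k; rewrite /delta -dpy; have := tri p y (c k); lra.
have diy : delta c rho i y = delta c rho i p - (1 - t) * eucl_dist p (c i).
  rewrite /delta dyc; ring.
have Aiy : A i y.
  move=> k; have := lowk k; have := Aip k; rewrite diy; lra.
have djy : delta c rho j y = delta c rho i y by rewrite /delta cji rji.
exists i, j; split => //; first by rewrite eq_sym.
  by move=> k; rewrite djy; apply: Aiy.
move=> k Aky; apply: Hk => m.
have := lowk k; have := Aky i; have := Aip m; rewrite diy; lra.
Qed.

Lemma seg_cont (o p : R * R) : continuous (seg o p).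
Proof.
apply: pair_cont => t; (apply: cvgD; first exact: cvg_cst);
  (apply: cvgM; [exact: cvg_id|exact: cvg_cst]).
Qed.

Lemma seg_dist (o p : R * R) t : 0 <= t -> eucl_dist (seg o p t) o = t * eucl_dist p o.
Proof. by move=> t0; apply: scale_dist => //=; ring. Qed.

Lemma seg_conn (o p : R * R) : connected (seg o p @` [set t | 0 <= t <= 1]).
Proof.
apply: connected_continuous_connected; last exact/continuous_subspaceT/seg_cont.
apply/connected_intervalP => a b ha hb z /andP[az zb]; apply/andP; split.
  by apply: le_trans az; case/andP: ha.
by apply: le_trans zb _; case/andP: hb.
Qed.
End G.

Lemma absorb {T : topologicalType} (S C : set T) x0 y :
  C `<=` S -> connected C -> C y -> connected_component S x0 y ->
  C `<=` connected_component S x0.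
Proof.
move=> CS cC Cy Ey.
have Ex0 : connected_component S x0 x0.
  apply: (connected_component_trans Ey); exact: (connected_component_sym Ey).
suff : (connected_component S x0 `|` C) `<=` connected_component S x0.
  by move=> H z Cz; apply: H; right.
apply: connected_component_max; first by left.
  move=> z [Ez|Cz].
    exact: (connected_component_sub Ez).
  exact: (CS _ Cz).
apply: connectedU; first by exists y.
  exact: component_connected.
exact: cC.
Qed.

Section G2.
Variables (R : realType) (N : nat) (c : 'I_N -> R * R) (rho : 'I_N -> R).
Local Notation A := (apollonius_cell c rho).
Local Notation S := (in_exactly_two_cells c rho).

Lemma seg0 (o p : R * R) : seg o p 0 = o.
Proof. by rewrite /seg !mul0r !addr0; case: o. Qed.
Lemma seg1 (o p : R * R) : seg o p 1 = p.
Proof. rewrite /seg !mul1r; case: p => a b /=; congr (_, _); ring. Qed.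

Lemma ident_case i j (E : set (R * R)) x0 p q :
  E = connected_component S x0 -> E `<=` A i -> E p -> E q -> j != i -> c j = c i -> rho j = rho i ->
  A j p -> (forall k, A k p -> k = i \/ k = j) ->
  arc_between E p q `<=`
    [set x | eucl_dist x (c i) <= Num.max (eucl_dist p (c i)) (eucl_dist q (c i))].
Proof.
move=> HE EA Ep Eq ji cji rji Ajp Hp.
have ES : E `<=` S by rewrite HE; exact: connected_component_sub.
have Ajq : A j q.
  move=> k; have := EA _ Eq k; by rewrite /delta cji rji.
have Hq : forall k, A k q -> k = i \/ k = j.
  have [j' [j'i Aj' Hj']] := partner (EA _ Eq) (ES _ Eq).
  case: (Hj' _ Ajq) => ej; first by rewrite ej eqxx in ji.
  by rewrite ej.
set I := [set t : R | 0 <= t <= 1].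
set C := seg (c i) p @` I `|` seg (c i) q @` I.
have CS : C `<=` S.
  move=> z [[t ht <-]|[t ht <-]]; apply: (seg_S ji cji rji) => //; exact: EA.
have cC : connected C.
  apply: connectedU; [|exact: seg_conn|exact: seg_conn].
  exists (c i); split; exists 0; rewrite ?seg0 //= /I /= lexx ler01 //.
have CE : C `<=` E.
  rewrite HE; apply: (absorb CS cC (y := p)); first by left; exists 1; rewrite ?seg1 // /I /= ler01 lexx.
  by rewrite -HE.
move=> x Hx; have : C x.
  apply: Hx => //; first by left; exists 1; rewrite ?seg1 // /I /= ler01 lexx.
  by right; exists 1; rewrite ?seg1 // /I /= ler01 lexx.
move=> [[t /andP[t0 t1] <-]|[t /andP[t0 t1] <-]]; rewrite /= seg_dist //.
  apply: le_trans (mxl _ _); have := dist_ge0 p (c i); nra.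
apply: le_trans (mxr _ _); have := dist_ge0 q (c i); nra.
Qed.
End G2.

Section G3.
Variables (R : realType) (N : nat) (c : 'I_N -> R * R) (rho : 'I_N -> R).
Local Notation A := (apollonius_cell c rho).
Local Notation S := (in_exactly_two_cells c rho).
Local Notation dl := (delta c rho).

Lemma delta_cont k : continuous (dl k).
Proof. move=> x; apply: cvgB; [exact: dist_cont|exact: cvg_cst]. Qed.

Lemma on_bisector i j (E : set (R * R)) x0 p :
  E = connected_component S x0 -> E `<=` A i -> E p -> j != i -> A j p ->
  forall y, E y -> dl i y = dl j y.
Proof.
move=> HE EA Ep ji Ajp.
have ES : E `<=` S by rewrite HE; exact: connected_component_sub.
have cE : connected E by rewrite HE; exact: component_connected.
set O := [set y | forall k, k != i -> k != j -> dl i y < dl k y].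
set Bs := [set y | dl i y - dl j y = 0].
have oO : open O.
  rewrite openE => y Oy; rewrite /interior.
  have : \forall z \near y, forall k, (k != i -> k != j -> dl i z < dl k z).
    apply: (@filter_forall _ 'I_N (fun k z => k != i -> k != j -> dl i z < dl k z) (nbhs y) (nbhs_filter y)) => k.
    have [/andP[ki kj]|hk] := boolP ((k != i) && (k != j)).
      have op : open ((fun z => dl k z - dl i z) @^-1` [set x : R | 0 < x]).
        apply: open_comp; last exact: open_gt.
        move=> z _; apply: cvgB; exact: delta_cont.
      have : nbhs y ((fun z => dl k z - dl i z) @^-1` [set x : R | 0 < x]).
        apply: open_nbhs_nbhs; split => //=; rewrite subr_gt0; exact: Oy.
      apply: filterS => z /= hz _ _; by rewrite -subr_gt0.
    apply: nearW => z ki kj; by rewrite ki kj in hk.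
  by [].
have cB : closed Bs.
  apply: (@preimage_closed _ _ (fun z => dl i z - dl j z) [set x : R | x = 0]); last exact: closed_eq.
  move=> z _; apply: cvgB; exact: delta_cont.
have EB : E `&` Bs = E.
  apply: cE.
  - exists p; split => //; rewrite /Bs /=.
    have := EA _ Ep j; have := Ajp i; lra.
  - exists O => //; apply/seteqP; split => z [Ez hz]; split => //.
      move=> k ki kj; rewrite ltNge; apply/negP => hk.
      have Aiz := EA _ Ez.
      have Akz : A k z by move=> m; apply: le_trans hk (Aiz m).
      have Ajz : A j z.
        move=> m; move: hz; rewrite /Bs /= => hz; have := Aiz m; lra.
      apply: (three_cells (ES _ Ez) Aiz Ajz Akz) => //; first by rewrite eq_sym.
        by rewrite eq_sym.
      by rewrite eq_sym.
    have [j' [j'i Aj' Hj']] := partner (EA _ Ez) (ES _ Ez).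
    rewrite /Bs /=.
    have [ej|nej] := eqVneq j' j.
      subst j'; have := EA _ Ez j; have := Aj' i; lra.
    have := hz j' j'i nej; have := Aj' i; lra.
  - by exists Bs.
move=> y Ey; have : (E `&` Bs) y by rewrite EB.
move=> [_]; rewrite /Bs /=; lra.
Qed.
End G3.

Section Hyp.
Variables (R : realType) (ci cj : R * R) (a : R).
Let e1 := cj.1 - ci.1.
Let e2 := cj.2 - ci.2.
Definition d2 := e1 ^+ 2 + e2 ^+ 2.
Definition kk := d2 - a ^+ 2.
Definition beta (y : R * R) := e1 * (y.2 - ci.2) - e2 * (y.1 - ci.1).

Lemma recon y : 0 < d2 -> eucl_dist y ci - eucl_dist y cj = a ->
  let r := eucl_dist y ci in
  [/\ y.1 = ci.1 + ((a * r + kk / 2) * e1 - beta y * e2) / d2,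
      y.2 = ci.2 + ((a * r + kk / 2) * e2 + beta y * e1) / d2,
      kk * (r ^+ 2 - a * r - kk / 4) = beta y ^+ 2 & 0 <= 2 * r - a].
Proof.
move=> d20 hrs r.
have hr := dist_sq y ci; have hs := dist_sq y cj.
have r0 : 0 <= r := dist_ge0 y ci.
have s0 := dist_ge0 y cj.
set s := eucl_dist y cj in hrs hs s0.
rewrite -/r in hr.
set u1 := y.1 - ci.1 in hr *; set u2 := y.2 - ci.2 in hr *.
have hs' : s ^+ 2 = (u1 - e1) ^+ 2 + (u2 - e2) ^+ 2.
  by rewrite hs /u1 /u2 /e1 /e2; congr (_ ^+ 2 + _ ^+ 2); ring.
have es : s = r - a by rewrite -/r in hrs; lra.
have al : u1 * e1 + u2 * e2 = a * r + kk / 2.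
  have H : 2 * (u1 * e1 + u2 * e2) = r ^+ 2 - s ^+ 2 + d2.
    by rewrite hr hs' /d2; ring.
  rewrite es in H; rewrite /kk.
  have -> : a * r + (d2 - a ^+ 2) / 2 = (2 * (u1 * e1 + u2 * e2)) / 2 by rewrite H; field.
  by field.
have dne : d2 != 0 := lt0r_neq0 d20.
split.
- have -> : y.1 = ci.1 + u1 by rewrite /u1; ring.
  rewrite -al /beta -/u1 -/u2; congr (_ + _); rewrite /d2 in dne *; by field.
- have -> : y.2 = ci.2 + u2 by rewrite /u2; ring.
  rewrite -al /beta -/u1 -/u2; congr (_ + _); rewrite /d2 in dne *; by field.
- have lag : d2 * r ^+ 2 = (u1 * e1 + u2 * e2) ^+ 2 + beta y ^+ 2.
    by rewrite hr /beta -/u1 -/u2 /d2; ring.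
  rewrite al in lag.
  have -> : beta y ^+ 2 = d2 * r ^+ 2 - (a * r + kk / 2) ^+ 2 by rewrite lag; ring.
  rewrite /kk; by field.
- lra.
Qed.

Lemma beta_cont : continuous beta.
Proof.
move=> y; apply: cvgB; (apply: cvgM; first exact: cvg_cst); (apply: cvgB; last exact: cvg_cst).
  exact: snd_cont.
exact: fst_cont.
Qed.

Lemma ray_case (E : set (R * R)) p q : connected E -> 0 < d2 -> kk = 0 ->
  (forall y, E y -> eucl_dist y ci - eucl_dist y cj = a) -> E p -> E q ->
  arc_between E p q `<=`
    [set x | eucl_dist x ci <= Num.max (eucl_dist p ci) (eucl_dist q ci)].
Proof.
move=> cE d20 k0 HB Ep Eq.
pose gam (t : R) := (ci.1 + a * t * e1 / d2, ci.2 + a * t * e2 / d2).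
apply: (key (phi := fun y => eucl_dist y ci) (gam := gam)) => //.
- exact: dist_cont.
- apply: pair_cont => t; (apply: cvgD; first exact: cvg_cst);
    (apply: cvgM; last exact: cvg_cst); (apply: cvgM; last exact: cvg_cst);
    (apply: cvgM; [exact: cvg_cst|exact: cvg_id]).
- move=> y Ey; have [h1 h2 h3 _] := recon d20 (HB _ Ey).
  rewrite k0 mul0r in h3; move/esym/eqP: h3; rewrite sqrf_eq0 => /eqP b0.
  rewrite /gam [y in RHS]surjective_pairing; congr (_, _); apply: esym.
    by rewrite {1}h1 b0 k0 mul0r addr0 mul0r subr0.
  by rewrite {1}h2 b0 k0 mul0r addr0 mul0r addr0.
- by move=> y _ /andP[_ h].
Qed.

Definition rh (t : R) := (a + Num.sqrt (d2 + 4 * (t * t) / kk)) / 2.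

Lemma rh_cont : continuous rh.
Proof.
move=> t; apply: cvgM; last exact: cvg_cst.
apply: cvgD; first exact: cvg_cst.
apply: continuous_comp; last exact: sqrt_continuous.
apply: cvgD; first exact: cvg_cst.
apply: cvgM; last exact: cvg_cst.
apply: cvgM; first exact: cvg_cst.
apply: cvgM; exact: cvg_id.
Qed.

Lemma hyp_r y : 0 < d2 -> 0 < kk -> eucl_dist y ci - eucl_dist y cj = a ->
  eucl_dist y ci = rh (beta y).
Proof.
move=> d20 k0 hy; have [_ _ h3 h4] := recon d20 hy.
set r := eucl_dist y ci in h3 h4 *.
rewrite /rh; have -> : d2 + 4 * (beta y * beta y) / kk = (2 * r - a) ^+ 2.
  rewrite -expr2 -h3 /kk; field; rewrite /kk in k0; exact: lt0r_neq0.
rewrite sqrtr_sqr ger0_norm //; by field.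
Qed.

Lemma hyp_case (E : set (R * R)) p q : connected E -> 0 < d2 -> 0 < kk ->
  (forall y, E y -> eucl_dist y ci - eucl_dist y cj = a) -> E p -> E q ->
  arc_between E p q `<=`
    [set x | eucl_dist x ci <= Num.max (eucl_dist p ci) (eucl_dist q ci)].
Proof.
move=> cE d20 k0 HB Ep Eq.
pose gam (t : R) := (ci.1 + ((a * rh t + kk / 2) * e1 - t * e2) / d2,
                     ci.2 + ((a * rh t + kk / 2) * e2 + t * e1) / d2).
apply: (key (phi := beta) (gam := gam)) => //.
- exact: beta_cont.
- have cA : continuous (fun t => a * rh t + kk / 2).
    move=> t; apply: cvgD; last exact: cvg_cst.
    by apply: cvgM; [exact: cvg_cst|exact: rh_cont].
  apply: pair_cont => t; (apply: cvgD; first exact: cvg_cst);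
    (apply: cvgM; last exact: cvg_cst).
    apply: cvgB; [apply: cvgM; [exact: cA|exact: cvg_cst]|apply: cvgM; [exact: cvg_id|exact: cvg_cst]].
  apply: cvgD; [apply: cvgM; [exact: cA|exact: cvg_cst]|apply: cvgM; [exact: cvg_id|exact: cvg_cst]].
- move=> y Ey; have [h1 h2 _ _] := recon d20 (HB _ Ey).
  rewrite /gam -(hyp_r d20 k0 (HB _ Ey)) [y in RHS]surjective_pairing; congr (_, _); apply: esym.
    by rewrite {1}h1.
  by rewrite {1}h2.
- move=> y Ey /andP[hlo hhi].
  rewrite /= (hyp_r d20 k0 (HB _ Ey)) (hyp_r d20 k0 (HB _ Ep)) (hyp_r d20 k0 (HB _ Eq)).
  have mono : forall t t', t * t <= t' * t' -> rh t <= rh t'.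
    move=> t t' htt; rewrite /rh ler_pM2r // lerD2l; apply: ler_wsqrtr.
    rewrite lerD2l ler_pM2r ?invr_gt0 // ler_pM2l //.
  have [b0|b0] := lerP 0 (beta y).
    case: (maxor (beta p) (beta q)) hhi => -> hhi.
      by apply: le_trans (mxl _ _); apply: mono; nra.
    by apply: le_trans (mxr _ _); apply: mono; nra.
  case: (minor (beta p) (beta q)) hlo => -> hlo.
    by apply: le_trans (mxl _ _); apply: mono; nra.
  by apply: le_trans (mxr _ _); apply: mono; nra.
Qed.
End Hyp.

Unset Implicit Arguments.
Theorem corollary2 (R : realType) (N : nat) (c : 'I_N -> R * R)
  (rho : 'I_N -> R) (rho_ge0 : forall i, 0 <= rho i)
  (i : 'I_N) (E : set (R * R)) (p q : R * R) :
  apollonius_edge_of c rho i E -> E p -> E q ->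
  arc_between E p q `<=`
    [set x | eucl_dist x (c i) <= Num.max (eucl_dist p (c i)) (eucl_dist q (c i))].
Proof.
move=> [x0 [Sx0 HE EA]] Ep Eq.
have ES : E `<=` in_exactly_two_cells c rho by rewrite HE; exact: connected_component_sub.
have cE : connected E by rewrite HE; exact: component_connected.
have [j [ji Ajp Hp]] := partner (EA _ Ep) (ES _ Ep).
have [/andP[/eqP cji /eqP rji]|nid] := boolP ((c j == c i) && (rho j == rho i)).
  exact: (ident_case HE EA Ep Eq ji cji rji Ajp Hp).
have onB := on_bisector HE EA Ep ji Ajp.
set a := rho i - rho j.
have HB : forall y, E y -> eucl_dist y (c i) - eucl_dist y (c j) = a.
  move=> y Ey; have := onB _ Ey; rewrite /delta /a; lra.
have hD : eucl_dist (c j) (c i) ^+ 2 = d2 (c i) (c j) by rewrite dist_sq.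
have hD' : eucl_dist (c i) (c j) ^+ 2 = d2 (c i) (c j) by rewrite dist_sq /d2; ring.
have D0 := dist_ge0 (c j) (c i); have D0' := dist_ge0 (c i) (c j).
have DD : eucl_dist (c i) (c j) = eucl_dist (c j) (c i).
  by apply/eqP; rewrite -(eqrXn2 (n := 2)) // hD hD'.
have t1 := tri p (c j) (c i); have t2 := tri p (c i) (c j).
have hp := HB _ Ep.
have aD : a ^+ 2 <= d2 (c i) (c j).
  rewrite -hD; rewrite DD in t2; nra.
have d20 : 0 < d2 (c i) (c j).
  rewrite lt_neqAle; apply/andP; split; last by rewrite -hD sqr_ge0.
  apply/negP => /eqP h0; move: nid; apply/negP; rewrite negbK.
  have a0 : a = 0 by nra.
  have h1 := sqr_ge0 ((c j).1 - (c i).1); have h2 := sqr_ge0 ((c j).2 - (c i).2).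
  have e10 : (c j).1 - (c i).1 = 0.
    have : ((c j).1 - (c i).1) ^+ 2 = 0 by move: h0; rewrite /d2; lra.
    by move/eqP; rewrite sqrf_eq0 => /eqP.
  have e20 : (c j).2 - (c i).2 = 0.
    have : ((c j).2 - (c i).2) ^+ 2 = 0 by move: h0; rewrite /d2; lra.
    by move/eqP; rewrite sqrf_eq0 => /eqP.
  apply/andP; split; apply/eqP.
    by rewrite [c j]surjective_pairing [c i]surjective_pairing; congr (_, _); lra.
  by move: a0; rewrite /a; lra.
have [k0|k0] := eqVneq (kk (c i) (c j) a) 0.
  exact: (ray_case cE d20 k0 HB Ep Eq).
have kp : 0 < kk (c i) (c j) a by rewrite lt_neqAle eq_sym k0 /kk subr_ge0.
exact: (hyp_case cE d20 kp HB Ep Eq).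
Qed.
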